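(* Let $H, G_1,\dots,G_r$ be finite simple graphs and $q\in\{1,\dots,r\}$ a positive integer. Suppose that $\widehat{H}\otimes\mathcal{C}_q\le\bigoplus_{d=1}^r\widehat{G_d}\otimes\mathcal{C}_d$. Then $\widehat{H}\otimes\mathcal{C}_q\le\bigoplus_{d=q}^r\widehat{G_d}\otimes\mathcal{C}_d$.
   Context: A noncommutative graph is a subspace $S\subseteq B(\mathcal{H})$ of operators on a finite-dimensional complex Hilbert space $\mathcal{H}$ with $I\in S$ and $S^*=S$. For noncommutative graphs $T\subseteq B(\mathcal{K})$ and $S\subseteq B(\mathcal{H})$, a cohomomorphism from $T$ to $S$ is a finite family of linear maps $E_i:\mathcal{K}\to\mathcal{H}$ ($i\in I$) with $\sum_i E_i^*E_i=I$ and $E_i^*SE_j\subseteq T$ for all $i,j\in I$; we write $T\le S$ if one exists. Tensor product: $S\otimes T=\operatorname{span}\{A\otimes B: A\in S, B\in T\}$; direct sum: $S\oplus T=\{A\oplus B:A\in S,B\in T\}$. For a finite simple graph $G$ (write $x\simeq x'$ if $x=x'$ or $x,x'$ adjacent), $\widehat{G}=\operatorname{span}\{|x\rangle\langle x'|: x,x'\in V(G), x\simeq x'\}\subseteq B(\mathbb{C}^{V(G)})$. For $d\ge1$, $\mathcal{C}_d=\mathbb{C}I\subseteq B(\mathbb{C}^d)$ (confusability graph of the noiseless $d$-dimensional quantum channel). If $V(G_d)$ is empty, the corresponding summand is zero-dimensional. *)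

(* Defs.v *)
From HB Require Import structures.
From mathcomp Require Import all_boot all_order all_algebra.
From mathcomp Require Import reals.
From mathcomp Require Import complex mxtens.
Set Implicit Arguments. Unset Strict Implicit. Unset Printing Implicit Defensive.
Import Order.TTheory GRing.Theory Num.Theory.
Local Open Scope ring_scope.

Section NCGraphs.
Variable R : realType.
Local Notation C := (R[i]).

Definition opset (n : nat) := 'M[C]_n -> Prop.

Definition adj h k (E : 'M[C]_(h, k)) : 'M[C]_(k, h) := (map_mx (@conjc R) E)^T.

Definition cohom_le k h (T : opset k) (S : opset h) : Prop :=
  exists (N : nat) (E : 'I_N -> 'M[C]_(h, k)),
    \sum_(i < N) adj (E i) *m E i = 1%:M /\
    forall (i j : 'I_N) (A : 'M[C]_h), S A -> T (adj (E i) *m A *m E j).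

Definition graph_simple n (e : rel 'I_n) : Prop :=
  irreflexive e /\ symmetric e.

Definition ghat n (e : rel 'I_n) : opset n := fun X =>
  exists c : 'I_n -> 'I_n -> C,
    X = \sum_(x < n) \sum_(x' < n | (x == x') || e x x') c x x' *: delta_mx x x'.

Definition ncC d : opset d := fun X => exists a : C, X = a%:M.

Definition ntens m p (S : opset m) (T : opset p) : opset (m * p) := fun X =>
  exists (N : nat) (c : 'I_N -> C) (A : 'I_N -> 'M[C]_m) (B : 'I_N -> 'M[C]_p),
    (forall i, S (A i) /\ T (B i)) /\ X = \sum_(i < N) c i *: (A i *t B i).

Definition ndsum k (p : 'I_k -> nat) (S : forall i, opset (p i))
  : opset (\sum_(i < k) p i) := fun X =>
  exists B : forall i, 'M[C]_(p i), (forall i, S i (B i)) /\ X = mxdiag B.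

End NCGraphs.

Arguments adj R {h k}.
Arguments cohom_le R {k h}.
Arguments ghat R {n}.
Arguments ncC R d _ : clear implicits.
Arguments ntens R {m p}.
Arguments ndsum R {k p}.

(* Main.v *)
Require Import Defs.
From HB Require Import structures.
From mathcomp Require Import all_boot all_order all_algebra.
From mathcomp Require Import reals.
From mathcomp Require Import complex mxtens.
From mathcomp Require Import ring zify.
Set Implicit Arguments. Unset Strict Implicit. Unset Printing Implicit Defensive.
Import Order.TTheory GRing.Theory Num.Theory.
Local Open Scope ring_scope.
Section HelperS.
Variable R : realType.
Local Notation C := (R[i]).
Local Notation adj := (Defs.adj R).

Lemma adjE h k (A : 'M[C]_(h,k)) i j : adj A i j = conjc (A j i).
Proof. by rewrite /Defs.adj !mxE. Qed.

Lemma adjM m n p (A : 'M[C]_(m,n)) (B : 'M[C]_(n,p)) : adj (A *m B) = adj B *m adj A.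
Proof. by rewrite /Defs.adj map_mxM trmx_mul. Qed.

Lemma adjK m n (A : 'M[C]_(m,n)) : adj (adj A) = A.
Proof. by apply/matrixP=> i j; rewrite !adjE conjcK. Qed.

Lemma adj_sum m n N (A : 'I_N -> 'M[C]_(m,n)) : adj (\sum_(i < N) A i) = \sum_(i < N) adj (A i).
Proof.
apply/matrixP=> i j; rewrite adjE !summxE rmorph_sum; apply: eq_bigr => k _.
by rewrite adjE.
Qed.

Lemma adj0 m n : adj (0 : 'M[C]_(m,n)) = 0.
Proof. by apply/matrixP=> i j; rewrite adjE !mxE rmorph0. Qed.

Lemma adj_delta m n (i : 'I_m) (j : 'I_n) : adj (delta_mx i j) = delta_mx j i.
Proof. by apply/matrixP=> a b; rewrite adjE !mxE rmorph_nat andbC. Qed.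

Lemma adj1 n : adj (1%:M : 'M[C]_n) = 1%:M.
Proof. by apply/matrixP=> a b; rewrite adjE !mxE rmorph_nat eq_sym. Qed.

Lemma adj_tens m n p q (A : 'M[C]_(m,n)) (B : 'M[C]_(p,q)) :
  adj (A *t B) = adj A *t adj B.
Proof. by apply/matrixP=> a b; rewrite adjE !mxE rmorphM. Qed.

Lemma adj_castmx m n m' n' (e : (m = m') * (n = n')) (A : 'M[C]_(m,n)) :
  adj (castmx e A) = castmx (e.2, e.1) (adj A).
Proof. by case: e => e1 e2; subst; rewrite !castmx_id. Qed.

Lemma tens1 m n : (1%:M : 'M[C]_m) *t (1%:M : 'M[C]_n) = 1%:M.
Proof.
apply/matrixP=> a b.
case: (mxtens_indexP a) => a1 a2; case: (mxtens_indexP b) => b1 b2.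
rewrite tensmxE !mxE (can_eq (@mxtens_indexK m n)) xpair_eqE.
by case: eqP; case: eqP; rewrite ?mulr1 ?mulr0 ?mul0r.
Qed.

Lemma tens_suml m n p q N (A : 'I_N -> 'M[C]_(m,n)) (B : 'M[C]_(p,q)) :
  (\sum_(i < N) A i) *t B = \sum_(i < N) (A i *t B).
Proof.
apply/matrixP=> a b; rewrite !mxE !summxE mulr_suml; apply: eq_bigr => i _.
by rewrite !mxE.
Qed.

Lemma ntens_form m q (S : opset R m) X :
  ntens R S (ncC R q) X -> exists M : 'M[C]_m, X = M *t 1%:M.
Proof.
case=> N [c [A [B [hAB ->]]]].
have hB i : exists a, B i == a%:M by case: (hAB i) => _ [a ->]; exists a.
pose a i := xchoose (hB i).
exists (\sum_(i < N) (c i * a i) *: A i).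
apply/matrixP=> u v; rewrite !mxE !summxE mulr_suml; apply: eq_bigr => i _.
rewrite !mxE (eqP (xchooseP (hB i))) !mxE.
by rewrite /a -mulr_natr; ring.
Qed.


Lemma adjYY0 m n (Y : 'M[C]_(m,n)) : adj Y *m Y = 0 -> Y = 0.
Proof.
move=> h; apply/matrixP=> a c; rewrite mxE.
have := congr1 (fun M : 'M[C]_n => M c c) h; rewrite !mxE => hs.
have nn : forall i : 'I_m, predT i -> 0 <= adj Y c i * Y i c.
  by move=> i _; rewrite adjE mulrC mulcJ_ge0.
have := @psumr_eq0P _ _ _ _ nn hs a isT.
rewrite adjE mulrC => /eqP; rewrite mulf_eq0 conjc_eq0 orbb; by move/eqP.
Qed.

Lemma tens_scal1 n (c : C) : (c%:M : 'M[C]_1) *t (1%:M : 'M[C]_n) = c%:M.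
Proof.
apply/matrixP=> a b.
case: (mxtens_indexP a) => a1 a2; case: (mxtens_indexP b) => b1 b2.
rewrite tensmxE !mxE (can_eq (@mxtens_indexK 1 n)) xpair_eqE !ord1 eqxx /=.
by case: eqP; rewrite ?mulr1 ?mulr0.
Qed.

Lemma Y0 m nH q (Y : 'M[C]_(m, nH * q)) (M : 'M[C]_nH) :
  (m < q)%N -> adj Y *m Y = M *t 1%:M -> Y = 0.
Proof.
move=> mq hY.
have [M0|] := eqVneq M 0.
  by apply: adjYY0; rewrite hY M0 tens0mx.
move=> nM.
have /existsP[h /existsP[h' nz]] : [exists h, exists h', M h h' != 0].
  apply: contraNT nM => /existsPn H; apply/eqP/matrixP=> i j.
  by move/existsPn: (H i) => /(_ j)/negPn/eqP; rewrite mxE.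
pose P := (delta_mx 0 h : 'M[C]_(1, nH)) *t (1%:M : 'M[C]_q).
pose Q := (delta_mx h' 0 : 'M[C]_(nH, 1)) *t (1%:M : 'M[C]_q).
have E1 : P *m (M *t 1%:M) *m Q = (M h h')%:M.
  rewrite /P /Q !tensmx_mul !mulmx1 -rowE -colE -tens_scal1; congr (_ *t _).
  by rewrite [LHS]mx11_scalar !mxE.
have : (1 * q <= m)%N.
  have <- : \rank ((M h h')%:M : 'M[C]_(1 * q)) = (1 * q)%N.
    by apply: mxrank_unit; rewrite -scalemx1 unitmxZ ?unitmx1 ?unitfE.
  rewrite -E1 -hY; apply: leq_trans (mxrankM_maxl _ _) _.
  apply: leq_trans (mxrankM_maxr _ _) _.
  apply: leq_trans (mxrankM_maxr _ _) _.
  exact: rank_leq_row.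
by rewrite mul1n leqNgt mq.
Qed.

Lemma vanish n d nH q (F : 'M[C]_(n * d, nH * q)) : (d < q)%N ->
  (forall x : 'I_n, exists M : 'M[C]_nH,
     adj F *m (delta_mx x x *t (1%:M : 'M[C]_d)) *m F = M *t 1%:M) -> F = 0.
Proof.
move=> dq H.
pose Dx (x : 'I_n) := (delta_mx 0 x : 'M[C]_(1, n)) *t (1%:M : 'M[C]_d).
have DD x : adj (Dx x) *m Dx x = delta_mx x x *t 1%:M.
  by rewrite adj_tens adj_delta adj1 tensmx_mul mul_delta_mx mulmx1.
have Z x : Dx x *m F = 0.
  case: (H x) => M hM; apply: (@Y0 (1 * d) nH q _ M); first by rewrite mul1n.
  by rewrite adjM mulmxA -[adj F *m _ *m _]mulmxA DD.
have S1 : \sum_(x < n) adj (Dx x) *m Dx x = 1%:M.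
  rewrite (eq_bigr _ (fun x _ => DD x)) -tens_suml.
  have -> : \sum_(x < n) (delta_mx x x : 'M[C]_n) = 1%:M.
    by rewrite (scalar_mx_sum_delta n 1); apply: eq_bigr => x _; rewrite scale1r.
  exact: tens1.
rewrite -[F]mul1mx -S1 mulmx_suml big1 // => x _.
by rewrite -mulmxA Z mulmx0.
Qed.

Lemma adj_mxcol k (p_ : 'I_k -> nat) m (F : forall i, 'M[C]_(p_ i, m)) :
  adj (\mxcol_i F i) = \mxrow_i adj (F i).
Proof. by apply/matrixP=> a b; rewrite !mxE. Qed.

Lemma blockprod k (p_ : 'I_k -> nat) m (E1 E2 : 'M[C]_(\sum_i p_ i, m))
  (B : forall i, 'M[C]_(p_ i)) :
  adj E1 *m mxdiag B *m E2 =
  \sum_i adj (submxcol E1 i) *m B i *m submxcol E2 i.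
Proof.
rewrite -{1}(submxcolK E1) -{1}(submxcolK E2) adj_mxcol mul_mxrow_mxdiag.
by rewrite mul_mxrow_mxcol.
Qed.

Lemma cast_sandwich m m' n (e : m = m') (A A' : 'M[C]_(m, n)) (B : 'M[C]_m') :
  adj (castmx (e, erefl n) A) *m B *m castmx (e, erefl n) A' =
  adj A *m castmx (esym e, esym e) B *m A'.
Proof. by case: m' / e in B *; rewrite !castmx_id. Qed.

Lemma castmx1 m m' (e : m = m') : castmx (e, e) (1%:M : 'M[C]_m) = 1%:M.
Proof. by case: m' / e; rewrite castmx_id. Qed.

Lemma Scast (f : nat -> nat) (S : forall d, opset R (f d)) d1 d2 (e : d1 = d2)
  (X : 'M[C]_(f d1)) : S d1 X -> S d2 (castmx (congr1 f e, congr1 f e) X).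
Proof. by case: d2 / e; rewrite castmx_id. Qed.

Lemma ghat_delta n (e : rel 'I_n) x : ghat R e (delta_mx x x).
Proof.
exists (fun u v => ((u == x) && (v == x))%:R).
rewrite [RHS](bigD1 x) //= [X in X + _](bigD1 x) ?eqxx //= scale1r.
rewrite big1 ?addr0 => [|v /andP[_ vx]]; last by rewrite (negbTE vx) scale0r.
rewrite big1 ?addr0 // => u ux; rewrite big1 // => v _.
by rewrite (negbTE ux) scale0r.
Qed.

Lemma ntens0 m p (S : opset R m) (T : opset R p) : ntens R S T 0.
Proof.
by exists 0%N, (fun _ => 0), (fun _ => 0), (fun _ => 0); split=> [[]//|]; rewrite big_ord0.
Qed.

Lemma ntens_delta n (e : rel 'I_n) d (x : 'I_n) :
  ntens R (ghat R e) (ncC R d) (delta_mx x x *t 1%:M).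
Proof.
exists 1%N, (fun _ => 1), (fun _ => delta_mx x x), (fun _ => 1%:M); split.
  by move=> _; split; [exact: ghat_delta | exists 1].
by rewrite big_ord1 scale1r.
Qed.

End HelperS.

Theorem lemma3p2 (R : realType) (r q : nat)
  (nH : nat) (eH : rel 'I_nH) (nG : nat -> nat) (eG : forall d : nat, rel 'I_(nG d))
  (hH : graph_simple eH)
  (hG : forall d : nat, (1 <= d <= r)%N -> graph_simple (eG d))
  (hq1 : (1 <= q)%N) (hqr : (q <= r)%N) :
  cohom_le R (ntens R (ghat R eH) (ncC R q))
    (ndsum R (fun i : 'I_r => ntens R (ghat R (eG i.+1)) (ncC R i.+1))) ->
  cohom_le R (ntens R (ghat R eH) (ncC R q))
    (ndsum R (fun i : 'I_(r.+1 - q) => ntens R (ghat R (eG (q + i)%N)) (ncC R (q + i)%N))).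
Proof.
move=> [N [E [hsum hE]]].
pose F a (j : 'I_r) : 'M[R[i]]_(nG j.+1 * j.+1, nH * q) := submxcol (E a) j.
have V a (j : 'I_r) : (j.+1 < q)%N -> F a j = 0.
  move=> jq; apply: (@vanish R (nG j.+1) j.+1 nH q) => // x.
  pose B := fun i : 'I_r => if i == j then
     conform_mx (0 : 'M[R[i]]_(nG i.+1 * i.+1)) (delta_mx x x *t (1%:M : 'M[R[i]]_j.+1))
     else 0.
  have hB : ndsum R (fun i : 'I_r => ntens R (ghat R (eG i.+1)) (ncC R i.+1)) (mxdiag B).
    exists B; split => // i; rewrite /B; case: eqP => [->|_].
      by rewrite conform_mx_id; exact: ntens_delta.
    exact: ntens0.
  have := hE a a _ hB; rewrite blockprod (bigD1 j) //= big1 => [|i ij]; last first.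
    by rewrite /B (negbTE ij) mulmx0 mul0mx.
  by rewrite addr0 /B eqxx conform_mx_id => /ntens_form.
have phiP (j : 'I_(r.+1 - q)) : ((q + j).-1 < r)%N.
  by have := ltn_ord j; lia.
pose phi j := Ordinal (phiP j).
have ephi j : (phi j).+1 = (q + j)%N by rewrite /= prednK //; lia.
have phi_inj : injective phi.
  by move=> j1 j2 /(congr1 val) /= h; apply/val_inj => /=; lia.
have RI (g : 'I_r -> 'M[R[i]]_(nH * q)) :
    (forall i : 'I_r, (i.+1 < q)%N -> g i = 0) ->
    \sum_(j < r.+1 - q) g (phi j) = \sum_(i < r) g i.
  move=> g0.
  pose gn k := if insub k is Some i then g i else 0.
  transitivity (\sum_(j < r.+1 - q) gn (j + q.-1)%N).
    apply: eq_bigr => j _; rewrite /gn.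
    have -> : (j + q.-1)%N = val (phi j) by rewrite /=; lia.
    by rewrite valK.
  transitivity (\sum_(i < r) gn i); last by apply: eq_bigr => i _; rewrite /gn valK.
  rewrite -(big_mkord xpredT (fun j => gn (j + q.-1)%N)) -(big_mkord xpredT gn).
  rewrite [RHS](@big_cat_nat _ _ _ q.-1) //=; last by lia.
  rewrite [X in _ = X + _]big1_seq ?add0r; last first.
    move=> k /andP[_]; rewrite mem_index_iota => /andP[_ kq].
    rewrite /gn; case: insubP => [i' _ vi|//]; apply: g0; rewrite vi; lia.
  have -> : (r.+1 - q = r - q.-1)%N by lia.
  by rewrite [RHS](big_addn 0 r q.-1).
pose ef j := congr1 (fun d => (nG d * d)%N) (ephi j).
pose G a j := castmx (ef j, erefl (nH * q)) (F a (phi j)).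
exists N, (fun a => \mxcol_j G a j); split.
  rewrite -hsum; apply: eq_bigr => a _.
  rewrite -[adj R (\mxcol_j G a j)]mulmx1 -[adj R (E a)]mulmx1.
  rewrite -(mxdiagZ (p_ := fun j : 'I_(r.+1 - q) => (nG (q + j) * (q + j))%N) 1).
  rewrite -(mxdiagZ (p_ := fun i : 'I_r => (nG i.+1 * i.+1)%N) 1).
  rewrite !blockprod.
  under eq_bigr do rewrite !mxcolK /G cast_sandwich castmx1.
  rewrite (RI (fun i => adj R (F a i) *m 1%:M *m F a i)) // => i iq.
  by rewrite V // mulmx0.
move=> a b A' [B' [hB' ->]].
pose B i := if [pick j | phi j == i] is Some j then
   conform_mx (0 : 'M[R[i]]_(nG i.+1 * i.+1)) (B' j) else 0.
have hB : ndsum R (fun i : 'I_r => ntens R (ghat R (eG i.+1)) (ncC R i.+1)) (mxdiag B).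
  exists B; split => // i; rewrite /B; case: pickP => [j /eqP <-|_]; last exact: ntens0.
  rewrite -(conform_castmx (congr1 (fun d => (nG d * d)%N) (esym (ephi j)),
                               congr1 (fun d => (nG d * d)%N) (esym (ephi j)))).
  rewrite conform_mx_id.
  exact: (@Scast R (fun d => (nG d * d)%N)
            (fun d => ntens R (ghat R (eG d)) (ncC R d)) _ _ (esym (ephi j)) (B' j) (hB' j)).
have := hE a b _ hB; rewrite !blockprod.
suff -> : (\sum_j adj R (submxcol (\mxcol_j G a j) j) *m B' j *m submxcol (\mxcol_j G b j) j)
   = \sum_i adj R (F a i) *m B i *m F b i by [].
under eq_bigr do rewrite !mxcolK /G cast_sandwich.
rewrite -(RI (fun i => adj R (F a i) *m B i *m F b i)) => [|i iq]; last first.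
  by rewrite V // adj0 !mul0mx.
apply: eq_bigr => j _; congr (_ *m _ *m _); rewrite /B.
case: pickP => [j' hj|/(_ j)]; last by rewrite eqxx.
have -> : j' = j by apply: phi_inj; apply/eqP.
by rewrite -(conform_castmx (esym (ef j), esym (ef j))) conform_mx_id.
Qed.
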